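(* Let $d=\mu_+-\mu_-$. For every $\epsilon\in[0,d/4]$ and every $K\in(1,\bar B_K(\epsilon)]$, where $$\bar B_K(\epsilon)=\min\left\{\exp\!\left(\frac{(d-2\epsilon)^2}{2}\right),\ \phi^{-1}\!\left(\frac{d}{\epsilon}-2\right)\right\}$$ (with $\phi^{-1}(+\infty):=+\infty$ when $\epsilon=0$), and $\phi^{-1}$ is the inverse of the bijection $\phi:[1,+\infty)\to[2,+\infty)$, $\phi(x)=x+1/x$, one has $$R^{\epsilon}_{\mathrm{bdy}}(\theta_{\mathrm f})\;\ge\;R^{\epsilon}_{\mathrm{bdy}}(\theta^* )\;\ge\;R^{\epsilon}_{\mathrm{bdy}}(\theta^{(\epsilon)}_{\mathrm r}).$$
   Context: Setting (one-dimensional Gaussian mixture). Fix real numbers $\mu_-<\mu_+$ and $K>1$, and let $d=\mu_+-\mu_-$. Let $(X,Y)$ be a random pair with $\Pr(Y=1)=\Pr(Y=-1)=\tfrac12$, $X\mid Y=-1\sim\mathcal N(\mu_-,1)$, and $X\mid Y=1\sim\mathcal N(\mu_+,K^2)$. For $\theta\in\mathbb R$, $f_\theta(x)=1$ if $x>\theta$ and $f_\theta(x)=-1$ otherwise. Class-conditional errors: $e_+(\theta)=\Pr(X\le\theta\mid Y=1)$, $e_-(\theta)=\Pr(X>\theta\mid Y=-1)$. Natural error: $R_{\mathrm{nat}}(\theta)=\tfrac12 e_+(\theta)+\tfrac12 e_-(\theta)$. For $\epsilon\ge0$, robust error: $R_{\mathrm{rob}}^{\epsilon}(\theta)=\tfrac12\Pr(X\le\theta+\epsilon\mid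 Y=1)+\tfrac12\Pr(X>\theta-\epsilon\mid Y=-1)$; boundary error: $R^{\epsilon}_{\mathrm{bdy}}(\theta)=\Pr(\exists\tau,\ |\tau|\le\epsilon,\ f_\theta(X+\tau)\ne f_\theta(X),\ f_\theta(X)=Y)=\tfrac12\Pr(\theta<X\le\theta+\epsilon\mid Y=1)+\tfrac12\Pr(\theta-\epsilon<X\le\theta\mid Y=-1)$. Optimal models: $\theta^*$ minimizes $R_{\mathrm{nat}}$ over $[\mu_-,\mu_+]$; $\theta_{\mathrm f}$ is the threshold in $[\mu_-,\mu_+]$ with $e_+(\theta_{\mathrm f})=e_-(\theta_{\mathrm f})$; $\theta^{(\epsilon)}_{\mathrm r}$ minimizes $R^{\epsilon}_{\mathrm{rob}}$ over $[\mu_-,\mu_+]$. *)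

(* Defs.v *)
From Stdlib Require Import Reals.
From Coquelicot Require Import Coquelicot.
Open Scope R_scope.

Definition gauss_pdf (t : R) : R := exp (- t ^ 2 / 2) / sqrt (2 * PI).
Definition Phi (x : R) : R :=
  RInt_gen gauss_pdf (Rbar_locally m_infty) (at_point x).

Definition normal_cdf (m s t : R) : R := Phi ((t - m) / s).

Section Model.
(* X | Y=-1 ~ N(mum,1), X | Y=1 ~ N(mup,K^2) *)
Variables (mum mup K : R).

Definition e_plus (th : R) : R := normal_cdf mup K th.
Definition e_minus (th : R) : R := 1 - normal_cdf mum 1 th.

Definition R_nat (th : R) : R := / 2 * e_plus th + / 2 * e_minus th.

Definition R_rob (eps th : R) : R :=
  / 2 * normal_cdf mup K (th + eps) + / 2 * (1 - normal_cdf mum 1 (th - eps)).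

Definition R_bdy (eps th : R) : R :=
  / 2 * (normal_cdf mup K (th + eps) - normal_cdf mup K th)
  + / 2 * (normal_cdf mum 1 th - normal_cdf mum 1 (th - eps)).

Definition is_theta_star (th : R) : Prop :=
  mum <= th <= mup /\ forall t, mum <= t <= mup -> R_nat th <= R_nat t.

Definition is_theta_f (th : R) : Prop :=
  mum <= th <= mup /\ e_plus th = e_minus th.

Definition is_theta_r (eps th : R) : Prop :=
  mum <= th <= mup /\ forall t, mum <= t <= mup -> R_rob eps th <= R_rob eps t.
End Model.

Definition phi (x : R) : R := x + / x.
Definition phi_inv (y : R) : R := (y + sqrt (y ^ 2 - 4)) / 2.

(* K <= Bbar_K(eps) = min{ exp((d-2eps)^2/2), phi^{-1}(d/eps - 2) },
   with phi^{-1}(+oo) = +oo when eps = 0. *)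
Definition K_le_Bbar (d eps K : R) : Prop :=
  K <= exp ((d - 2 * eps) ^ 2 / 2) /\
  (eps = 0 \/ K <= phi_inv (d / eps - 2)).

(* Main.v *)
Require Import Defs.
From Stdlib Require Import Reals Lra Psatz FunctionalExtensionality.
From Coquelicot Require Import Coquelicot.
Open Scope R_scope.

Definition gf (t : R) : R := exp (- t ^ 2 / 2).

Lemma cont_d (f : R -> R) x : ex_derive f x -> continuous f x.
Proof. intros H; apply (ex_derive_continuous (K:=R_AbsRing) (V:=R_NormedModule)); exact H. Qed.

Lemma ex_RInt_c (f : R -> R) a b :
  (forall z, Rmin a b <= z <= Rmax a b -> continuous f z) -> ex_RInt f a b.
Proof. intros H; apply (ex_RInt_continuous (V:=R_CompleteNormedModule)); exact H. Qed.

Lemma gf_pos t : 0 < gf t.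
Proof. apply exp_pos. Qed.

Lemma gf_cont t : continuous gf t.
Proof. apply cont_d; unfold gf; auto_derive; auto. Qed.

Lemma gf_ex a b : ex_RInt gf a b.
Proof. apply ex_RInt_c; intros; apply gf_cont. Qed.

Definition I0 (x : R) : R := RInt gf 0 x.

Lemma I0_deriv (x : R) : is_derive I0 x (gf x).
Proof.
  apply is_derive_RInt with 0.
  - apply filter_forall; intros; unfold I0; apply (RInt_correct (V:=R_CompleteNormedModule)), gf_ex.
  - apply gf_cont.
Qed.

Lemma I0_0 : I0 0 = 0.
Proof. unfold I0; rewrite RInt_point; reflexivity. Qed.

Lemma I0_lt x y : x < y -> I0 x < I0 y.
Proof.
  intros Hxy.
  destruct (MVT_cor2 I0 gf x y Hxy) as [c [Hc _]].
  { intros c _; apply is_derive_Reals, I0_deriv. }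
  assert (0 < gf c * (y - x)) by (apply Rmult_lt_0_compat; [apply gf_pos|lra]).
  lra.
Qed.

Lemma I0_le x y : x <= y -> I0 x <= I0 y.
Proof. intros [H|H]; [left; apply I0_lt; auto| subst; lra]. Qed.

Definition jf (u t : R) : R := exp (- u ^ 2 * (1 + t ^ 2) / 2) / (1 + t ^ 2).
Definition J (x : R) : R := RInt (fun t => jf x t) 0 1.

Lemma jf_ex u a b : ex_RInt (fun t => jf u t) a b.
Proof.
  apply ex_RInt_c; intros; apply cont_d; unfold jf;
  auto_derive; nra.
Qed.

Lemma jf_Derive u v : Derive (fun z => jf z v) u = - u * exp (- u ^ 2 * (1 + v ^ 2) / 2).
Proof.
  apply is_derive_unique; unfold jf; auto_derive. nra. replace (- (u * (u * 1)) * (1 + v * (v * 1)) * / 2) with (- u ^ 2 * (1 + v ^ 2) / 2) by field. field. nra.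
Qed.

Lemma J_deriv (x : R) : is_derive J x (- gf x * I0 x).
Proof.
  unfold J.
  assert (H := is_derive_RInt_param jf 0 1 x).
  replace (- gf x * I0 x) with (RInt (fun t => Derive (fun u => jf u t) x) 0 1).
  apply H.
  - apply filter_forall; intros y t _; unfold jf; auto_derive; nra.
  - intros t _.
    apply continuity_2d_pt_ext with (fun u v => - u * exp (- u ^ 2 * (1 + v ^ 2) / 2)).
    { intros; rewrite jf_Derive; auto. }
    apply continuity_2d_pt_mult.
    + apply continuity_2d_pt_opp, continuity_2d_pt_id1.
    + apply continuity_1d_2d_pt_comp.
      * apply derivable_continuous_pt, derivable_pt_exp.
      * repeat first [ apply continuity_2d_pt_mult | apply continuity_2d_pt_plus
                     | apply continuity_2d_pt_opp | apply continuity_2d_pt_id1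
                     | apply continuity_2d_pt_id2 | apply continuity_2d_pt_const
                     | apply continuity_2d_pt_inv ].
  - apply filter_forall; intros; apply jf_ex.
  - clear H.
    rewrite (RInt_ext _ (fun t => (- gf x) * (x * gf (x * t + 0)))).
    2:{ intros t _; rewrite jf_Derive. unfold gf. replace (- x ^ 2 * (1 + t ^ 2) / 2)
          with (- x ^ 2 / 2 + - (x * t + 0) ^ 2 / 2) by field.
          rewrite exp_plus. match goal with |- @eq _ ?a ?b => change (@eq R a b) end; ring. }
    assert (E2 : RInt (fun t => (- gf x) * (x * gf (x * t + 0))) 0 1
               = (- gf x) * RInt (fun t => x * gf (x * t + 0)) 0 1).
    { exact (RInt_scal (V:=R_CompleteNormedModule) (fun t => x * gf (x*t+0)) 0 1 (- gf x)
               (ex_RInt_comp_lin (V:=R_CompleteNormedModule) gf x 0 0 1 (gf_ex _ _))). }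
    assert (E3 : RInt (fun t => x * gf (x * t + 0)) 0 1 = RInt gf (x * 0 + 0) (x * 1 + 0)).
    { exact (RInt_comp_lin (V:=R_CompleteNormedModule) gf x 0 0 1 (gf_ex _ _)). }
    rewrite E2, E3. unfold I0. replace (x * 0 + 0) with 0 by ring. replace (x * 1 + 0) with x by ring.
    reflexivity.
Qed.



Lemma deq (f : R -> R) (x l l' : R) : is_derive f x l -> l = l' -> is_derive f x l'.
Proof. intros H ->; exact H. Qed.

Lemma h_deriv (x : R) : is_derive (fun x => I0 x * I0 x + 2 * J x) x 0.
Proof.
  eapply deq.
  - apply (is_derive_plus (K:=R_AbsRing) (V:=R_NormedModule)).
    + apply (is_derive_mult (K:=R_AbsRing)); [apply I0_deriv|apply I0_deriv|].
      intros; apply Rmult_comm.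
    + apply is_derive_scal. apply J_deriv.
  - unfold plus, mult, scal; simpl. unfold mult; simpl. ring.
Qed.

Lemma J0 : J 0 = PI / 4.
Proof.
  unfold J.
  rewrite (RInt_ext _ (fun t => / (1 + t ^ 2))).
  2:{ intros t _; unfold jf. replace (- 0 ^ 2 * (1 + t ^ 2) / 2) with 0 by field.
      rewrite exp_0. match goal with |- @eq _ ?a ?b => change (@eq R a b) end. field. nra. }
  assert (H : is_RInt (fun t => / (1 + t ^ 2)) 0 1 (minus (atan 1) (atan 0))).
  { apply (is_RInt_derive (V:=R_CompleteNormedModule)).
    - intros; apply is_derive_Reals, derivable_pt_lim_atan.
    - intros; apply cont_d; auto_derive; nra. }
  apply (is_RInt_unique (V:=R_CompleteNormedModule)) in H. rewrite H. unfold minus, plus, opp; simpl.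
  rewrite atan_1, atan_0. field.
Qed.

Lemma h_const (x : R) : I0 x * I0 x + 2 * J x = PI / 2.
Proof.
  set (h := fun x => I0 x * I0 x + 2 * J x).
  assert (H0 : h 0 = PI / 2) by (unfold h; rewrite I0_0, J0; field).
  change (h x = PI / 2).
  destruct (Rtotal_order 0 x) as [Hx|[Hx|Hx]].
  - destruct (MVT_cor2 h (fun _ => 0) 0 x Hx) as [c [Hc _]].
    { intros; apply is_derive_Reals, h_deriv. }
    lra.
  - subst; auto.
  - destruct (MVT_cor2 h (fun _ => 0) x 0 Hx) as [c [Hc _]].
    { intros; apply is_derive_Reals, h_deriv. }
    lra.
Qed.

Lemma J_bounds (x : R) : 0 <= J x <= gf x.
Proof.
  unfold J; split.
  - apply RInt_ge_0; [lra| apply jf_ex |]. intros t _; unfold jf.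
    apply Rlt_le, Rdiv_lt_0_compat; [apply exp_pos| nra].
  - replace (gf x) with (RInt (fun _ => gf x) 0 1).
    2:{ rewrite RInt_const. unfold scal; simpl; unfold mult; simpl. ring. }
    apply RInt_le; [lra| apply jf_ex | apply ex_RInt_c; intros; apply cont_d; auto_derive; auto |].
    intros t Ht. unfold jf, gf.
    assert (E : exp (- x ^ 2 * (1 + t ^ 2) / 2) <= exp (- x ^ 2 / 2)).
    { destruct (Req_dec x 0) as [->|Hx0].
      - right; f_equal; field.
      - left; apply exp_increasing. assert (0 < x^2 * t^2) by (apply Rmult_lt_0_compat; nra). nra. }
    apply Rmult_le_reg_r with (1 + t ^ 2); [nra|].
    unfold Rdiv. rewrite Rmult_assoc, Rinv_l by nra.
    assert (0 < exp (- x ^ 2 / 2)) by apply exp_pos. nra.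
Qed.

Lemma J_even (x : R) : J (- x) = J x.
Proof.
  unfold J, jf. f_equal. apply functional_extensionality; intros t.
  replace ((- x) ^ 2) with (x ^ 2) by ring. reflexivity.
Qed.

Lemma I0_odd (x : R) : I0 (- x) = - I0 x.
Proof.
  assert (E : I0 (- x) * I0 (- x) = I0 x * I0 x).
  { pose proof (h_const x). pose proof (h_const (-x)). rewrite J_even in *. lra. }
  destruct (Rle_dec 0 x).
  - pose proof (I0_le 0 x r). pose proof (I0_le (-x) 0 ltac:(lra)). rewrite I0_0 in *. nra.
  - pose proof (I0_le x 0 ltac:(lra)). pose proof (I0_le 0 (-x) ltac:(lra)). rewrite I0_0 in *. nra.
Qed.

Lemma I0_lim : filterlim I0 (Rbar_locally m_infty) (locally (- sqrt (PI / 2))).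
Proof.
  apply (filterlim_locally (U:=R_UniformSpace)).
  intros eps.
  set (p := sqrt (PI / 2)).
  assert (Pp : 0 < PI / 2) by (pose proof PI_RGT_0; lra).
  assert (pp : 0 < p) by (apply sqrt_lt_R0; auto).
  assert (p2 : p * p = PI / 2) by (apply sqrt_sqrt; lra).
  assert (ep : 0 < eps * p / 4) by (pose proof (cond_pos eps); apply Rdiv_lt_0_compat; nra).
  exists (Rmin (-2) (ln (eps * p / 4))).
  intros x Hx.
  assert (Hx1 : x < -2) by (eapply Rlt_le_trans; [exact Hx| apply Rmin_l]).
  assert (Hx2 : x < ln (eps * p / 4)) by (eapply Rlt_le_trans; [exact Hx| apply Rmin_r]).
  assert (Eg : gf x < eps * p / 4).
  { apply Rle_lt_trans with (exp x).
    - unfold gf. assert (Hq : - x ^ 2 / 2 <= x) by nra.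
      destruct (Rle_lt_or_eq_dec _ _ Hq) as [Hq'|Hq'].
      + left; apply exp_increasing; exact Hq'.
      + rewrite Hq'; lra.
    - rewrite <- (exp_ln (eps * p / 4)) by auto. apply exp_increasing; auto. }
  pose proof (J_bounds x) as [J1 J2].
  pose proof (h_const x) as H.
  pose proof (I0_le x 0 ltac:(lra)) as Hle. rewrite I0_0 in Hle.
  set (A := - I0 x) in *.
  assert (HA : A * A = PI / 2 - 2 * J x) by (replace (A * A) with (I0 x * I0 x) by (unfold A; ring); lra).
  assert (Hb : Rabs (p - A) * p <= 2 * J x).
  { assert (HA0 : 0 <= A) by (unfold A; lra).
    unfold Rabs; destruct (Rcase_abs (p - A)) as [Hn|Hn].
    - exfalso. assert (p * p < A * A) by (apply Rmult_le_0_lt_compat; lra). lra.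
    - assert (0 <= (p - A) * A) by (apply Rmult_le_pos; lra). nra. }
  assert (Hb2 : Rabs (p - A) * p < eps * p / 2) by lra.
  assert (Hb3 : Rabs (p - A) < eps / 2).
  { apply Rmult_lt_reg_r with p; auto. lra. }
  unfold ball; simpl; unfold AbsRing_ball, abs, minus, plus, opp; simpl.
  assert (E : I0 x + - - p = p - A) by (unfold A; ring). rewrite E.
  pose proof (cond_pos eps). lra.
Qed.

Ltac reR := match goal with |- @eq _ ?a ?b => change (@eq R a b) end.

Definition sq := sqrt (2 * PI).

Lemma sq_pos : 0 < sq.
Proof. unfold sq; apply sqrt_lt_R0; pose proof PI_RGT_0; lra. Qed.

Lemma sq_half : sqrt (PI / 2) / sq = / 2.
Proof.
  unfold sq. replace (2 * PI) with (4 * (PI / 2)) by field.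
  rewrite sqrt_mult by (pose proof PI_RGT_0; lra).
  replace 4 with (2 * 2) by ring. rewrite sqrt_square by lra.
  field. apply Rgt_not_eq, sqrt_lt_R0; pose proof PI_RGT_0; lra.
Qed.

Definition Dn (t : R) : R := I0 t / sq.

Lemma gauss_pdf_eq t : gauss_pdf t = gf t / sq.
Proof. reflexivity. Qed.

Lemma Dn_deriv (t : R) : is_derive Dn t (gauss_pdf t).
Proof.
  eapply deq.
  - apply (is_derive_ext (fun t => / sq * I0 t)). { intros; unfold Dn; reR; field; apply Rgt_not_eq, sq_pos. }
    apply is_derive_scal, I0_deriv.
  - rewrite gauss_pdf_eq. field. apply Rgt_not_eq, sq_pos.
Qed.

Lemma Phi_eq (x : R) : Phi x = Dn x + / 2.
Proof.
  assert (DF : Derive Dn = gauss_pdf).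
  { apply functional_extensionality; intros t; apply is_derive_unique, Dn_deriv. }
  assert (H : is_RInt_gen gauss_pdf (Rbar_locally m_infty) (at_point x) (Dn x - (- sqrt (PI / 2) / sq))).
  { rewrite <- DF. apply is_RInt_gen_Derive.
    - apply filter_forall; intros; eexists; apply Dn_deriv.
    - apply filter_forall; intros; rewrite DF. apply cont_d; unfold gauss_pdf; auto_derive; auto.
    - apply (filterlim_comp _ _ _ I0 (fun y => y / sq) _ (locally (- sqrt (PI / 2))) _ I0_lim).
      change (continuous (fun y => y / sq) (- sqrt (PI / 2))).
      apply cont_d; auto_derive; try exact I; apply Rgt_not_eq, sq_pos.
    - intros P HP. unfold filtermap, at_point. apply locally_singleton; exact HP. }
  unfold Phi. rewrite (is_RInt_gen_unique _ _ H).
  replace (Dn x - - sqrt (PI / 2) / sq) with (Dn x + sqrt (PI / 2) / sq) by (field; apply Rgt_not_eq, sq_pos).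
  rewrite sq_half; reflexivity.
Qed.

Lemma Dn_lt x y : x < y -> Dn x < Dn y.
Proof. intros H; unfold Dn; apply Rmult_lt_compat_r; [apply Rinv_0_lt_compat, sq_pos| apply I0_lt; auto]. Qed.

Lemma Dn_odd x : Dn (- x) = - Dn x.
Proof. unfold Dn; rewrite I0_odd; field; apply Rgt_not_eq, sq_pos. Qed.

Lemma Dn_inj x y : Dn x = Dn y -> x = y.
Proof.
  intros H; destruct (Rtotal_order x y) as [h|[h|h]]; auto;
  [apply Dn_lt in h| apply Dn_lt in h]; lra.
Qed.

Lemma dplus (f g : R -> R) x a b : is_derive f x a -> is_derive g x b -> is_derive (fun t => f t + g t) x (a + b).
Proof. intros; apply (is_derive_plus (K:=R_AbsRing) (V:=R_NormedModule)); auto. Qed.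
Lemma dminus (f g : R -> R) x a b : is_derive f x a -> is_derive g x b -> is_derive (fun t => f t - g t) x (a - b).
Proof. intros; apply (is_derive_minus (K:=R_AbsRing) (V:=R_NormedModule)); auto. Qed.
Lemma dscal (f : R -> R) k x a : is_derive f x a -> is_derive (fun t => k * f t) x (k * a).
Proof. intros; apply is_derive_scal; auto. Qed.
Lemma dconst (c x : R) : is_derive (fun _ => c) x 0.
Proof. apply (is_derive_const (K:=R_AbsRing) (V:=R_NormedModule)). Qed.

Lemma ncdf_deriv m k c (th : R) : k <> 0 ->
  is_derive (fun t => normal_cdf m k (t + c)) th (gauss_pdf ((th + c - m) / k) / k).
Proof.
  intros Hk.
  apply (is_derive_ext (fun t => Dn ((t + c - m) / k) + / 2)).
  { intros t; unfold normal_cdf; rewrite Phi_eq; reflexivity. }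
  eapply deq. apply dplus; [|apply dconst].
  apply (is_derive_comp Dn (fun t => (t + c - m) / k)). apply Dn_deriv.
  auto_derive; auto.
  unfold scal; simpl; unfold mult; simpl. field; auto.
Qed.

Lemma ncdf_deriv0 m k (th : R) : k <> 0 ->
  is_derive (fun t => normal_cdf m k t) th (gauss_pdf ((th - m) / k) / k).
Proof.
  intros Hk. apply (is_derive_ext (fun t => normal_cdf m k (t + 0))).
  { intros; rewrite Rplus_0_r; reflexivity. }
  eapply deq. apply ncdf_deriv; auto. rewrite Rplus_0_r; reflexivity.
Qed.

Lemma Rnat_deriv mum mup K (th : R) : K <> 0 ->
  is_derive (R_nat mum mup K) th
   (/ 2 * (gauss_pdf ((th - mup) / K) / K) - / 2 * (gauss_pdf ((th - mum) / 1) / 1)).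
Proof.
  intros HK. unfold R_nat, e_plus, e_minus.
  eapply deq. apply dplus. apply dscal, ncdf_deriv0; auto.
  apply dscal. apply dminus; [apply dconst| apply ncdf_deriv0; lra].
  ring.
Qed.

Lemma Rbdy_deriv mum mup K eps (th : R) : K <> 0 ->
  is_derive (R_bdy mum mup K eps) th
   (/ 2 * (gauss_pdf ((th + eps - mup) / K) / K - gauss_pdf ((th - mup) / K) / K)
    + / 2 * (gauss_pdf ((th - mum) / 1) / 1 - gauss_pdf ((th + - eps - mum) / 1) / 1)).
Proof.
  intros HK. unfold R_bdy.
  apply dplus; apply dscal; apply dminus.
  - apply ncdf_deriv; auto.
  - apply ncdf_deriv0; auto.
  - apply ncdf_deriv0; lra.
  - apply (ncdf_deriv mum 1 (- eps)); lra.
Qed.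

Lemma pdf_eq z k : k <> 0 -> gauss_pdf z / k = exp (- z ^ 2 / 2) / (sq * k).
Proof. intros; unfold gauss_pdf; fold sq; field; split; auto; apply Rgt_not_eq, sq_pos. Qed.

Lemma key_ineq (x d K eps : R) : 1 < K -> 0 <= eps -> eps * (K + 1) ^ 2 <= d * K ->
  d <= (1 + K) * x -> 0 < d ->
  exp (- ((x - d) / K) ^ 2 / 2) / K <= exp (- x ^ 2 / 2) ->
  exp (- ((x + eps - d) / K) ^ 2 / 2) / K - exp (- ((x - d) / K) ^ 2 / 2) / K
  <= exp (- (x - eps) ^ 2 / 2) - exp (- x ^ 2 / 2).
Proof.
  intros HK He Hed Hx Hd HPQ.
  set (y := (x - d) / K).
  set (X := eps * x - eps ^ 2 / 2).
  set (Y := - y * eps / K - eps ^ 2 / (2 * K ^ 2)).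
  assert (E1 : - (x - eps) ^ 2 / 2 = - x ^ 2 / 2 + X) by (unfold X; field).
  assert (E2 : - ((x + eps - d) / K) ^ 2 / 2 = - y ^ 2 / 2 + Y) by (unfold Y, y; field; lra).
  rewrite E1, E2, !exp_plus. fold y in HPQ.
  set (P := exp (- x ^ 2 / 2)) in *.
  set (Q0 := exp (- y ^ 2 / 2)) in *.
  assert (Hx0 : 0 <= x).
  { assert (0 < (1 + K) * x) by lra. destruct (Rle_lt_dec 0 x); auto. nra. }
  assert (Hek : eps * (K + 1) <= K * x).
  { assert (eps * (K + 1) * (K + 1) <= K * x * (K + 1)) by nra. 
    apply Rmult_le_reg_r with (K + 1); lra. }
  assert (HX0 : 0 <= X).
  { unfold X. assert (eps <= x).
    { assert (K * x <= (K + 1) * x) by nra.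
      apply Rmult_le_reg_r with (K + 1); lra. }
    replace (eps * x - eps ^ 2 / 2) with (eps * (x - eps / 2)) by field.
    apply Rmult_le_pos; lra. }
  assert (HXY : Y <= X).
  { assert (h1 : eps * (K + 1) * (K - 1) <= K * x * (K - 1)) by (apply Rmult_le_compat_r; lra).
    assert (h2 : 0 <= K * x * (K - 1)) by (apply Rmult_le_pos; [apply Rmult_le_pos|]; lra).
    assert (h3 : d * (K - 1) <= (1 + K) * x * (K - 1)) by (apply Rmult_le_compat_r; lra).
    assert (Hb : 0 <= (K ^ 2 + 1) * x - d - eps * (K ^ 2 - 1) / 2) by nra.
    assert (EXY : X - Y = eps * ((K ^ 2 + 1) * x - d - eps * (K ^ 2 - 1) / 2) / K ^ 2)
      by (unfold X, Y, y; field; lra).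
    assert (0 <= X - Y).
    { rewrite EXY. apply Rmult_le_pos; [apply Rmult_le_pos; auto| ].
      apply Rlt_le, Rinv_0_lt_compat; nra. }
    lra. }
  assert (eY : exp Y <= exp X).
  { destruct (Rle_lt_or_eq_dec _ _ HXY) as [h|h]; [left; apply exp_increasing; auto| rewrite h; lra]. }
  assert (eX : 1 <= exp X).
  { rewrite <- exp_0. destruct (Rle_lt_or_eq_dec _ _ HX0) as [h|h]; [left; apply exp_increasing; auto| rewrite <- h; lra]. }
  assert (HQ : 0 < Q0 / K) by (apply Rdiv_lt_0_compat; [apply exp_pos|lra]).
  replace (Q0 * exp Y / K) with (Q0 / K * exp Y) by (field; lra).
  set (Q := Q0 / K) in *.
  destruct (Rle_dec (exp Y) 1).
  - nra.
  - nra.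
Qed.

Lemma pdfB_eq mup K t : 1 < K ->
  gauss_pdf ((t - mup) / K) / K = exp (- ((t - mup) / K) ^ 2 / 2 - ln K) / sq.
Proof.
  intros HK. rewrite pdf_eq by lra. unfold Rminus at 2. rewrite exp_plus, exp_Ropp, exp_ln by lra.
  field. split; [lra| apply Rgt_not_eq, sq_pos].
Qed.

Lemma pdfA_eq mum t :
  gauss_pdf ((t - mum) / 1) / 1 = exp (- (t - mum) ^ 2 / 2) / sq.
Proof.
  rewrite pdf_eq by lra. replace ((t - mum) / 1) with (t - mum) by field.
  field. apply Rgt_not_eq, sq_pos.
Qed.

Lemma div_sq_lt a b : a / sq < b / sq <-> a < b.
Proof.
  pose proof sq_pos. split; intros H'.
  - apply Rmult_lt_reg_r with (/ sq); [apply Rinv_0_lt_compat; auto| exact H'].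
  - apply Rmult_lt_compat_r; [apply Rinv_0_lt_compat; auto| exact H'].
Qed.

Lemma exp_lt_iff a b : exp a < exp b <-> a < b.
Proof. split; [apply exp_lt_inv| apply exp_increasing]. Qed.

Lemma AB_lt mum mup K t : 1 < K ->
  (gauss_pdf ((t - mum) / 1) / 1 < gauss_pdf ((t - mup) / K) / K <->
   2 * ln K < (t - mum) ^ 2 - ((t - mup) / K) ^ 2).
Proof.
  intros HK. rewrite pdfA_eq, pdfB_eq by auto. rewrite div_sq_lt, exp_lt_iff. lra.
Qed.

Lemma BA_lt mum mup K t : 1 < K ->
  (gauss_pdf ((t - mup) / K) / K < gauss_pdf ((t - mum) / 1) / 1 <->
   (t - mum) ^ 2 - ((t - mup) / K) ^ 2 < 2 * ln K).
Proof.
  intros HK. rewrite pdfA_eq, pdfB_eq by auto. rewrite div_sq_lt, exp_lt_iff. lra.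
Qed.

Lemma g_mono mum mup K s t : 1 < K -> mum <= s -> s <= t -> t <= mup ->
  (s - mum) ^ 2 - ((s - mup) / K) ^ 2 <= (t - mum) ^ 2 - ((t - mup) / K) ^ 2.
Proof.
  intros HK H1 H2 H3.
  set (k := / K).
  assert (E : (t - mum) ^ 2 - ((t - mup) / K) ^ 2 - ((s - mum) ^ 2 - ((s - mup) / K) ^ 2)
            = (t - s) * ((t + s - 2 * mum) + (2 * mup - t - s) * k ^ 2)) by (unfold k; field; lra).
  assert (0 <= (t - s) * ((t + s - 2 * mum) + (2 * mup - t - s) * k ^ 2)).
  { apply Rmult_le_pos; [lra|]. assert (0 <= (2 * mup - t - s) * k ^ 2) by (apply Rmult_le_pos; [lra| apply pow2_ge_0]). lra. }
  lra.
Qed.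

Lemma eps_cond d eps K : 0 <= eps -> 1 < K -> 0 < d ->
  (eps = 0 \/ K <= phi_inv (d / eps - 2)) -> eps * (K + 1) ^ 2 <= d * K.
Proof.
  intros He HK Hd [->|H].
  - nra.
  - destruct (Req_dec eps 0) as [->|Hn]; [nra|].
    assert (ep : 0 < eps) by lra.
    set (y := d / eps - 2) in *.
    assert (Hy : eps * y = d - 2 * eps) by (unfold y; field; lra).
    unfold phi_inv in H.
    assert (Hq : K ^ 2 - K * y + 1 <= 0).
    { destruct (Rle_dec (y ^ 2 - 4) 0) as [h|h].
      - rewrite sqrt_neg_0 in H by auto. nra.
      - set (r := sqrt (y ^ 2 - 4)) in *.
        assert (rr : r * r = y ^ 2 - 4) by (apply sqrt_sqrt; lra).
        assert (r0 : 0 <= r) by apply sqrt_pos.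
        destruct (Rle_dec (2 * K - y) 0); [nra|].
        assert ((2 * K - y) * (2 * K - y) <= r * r) by (apply Rmult_le_compat; lra).
        nra. }
    assert (eps * (K ^ 2 - K * y + 1) <= 0) by (assert (0 <= eps * (-(K ^ 2 - K * y + 1))) by (apply Rmult_le_pos; lra); lra).
    nra.
Qed.

Theorem corollary6p3 (mum mup K eps th_star th_f th_r : R) :
  mum < mup ->
  0 <= eps <= (mup - mum) / 4 ->
  1 < K -> K_le_Bbar (mup - mum) eps K ->
  is_theta_star mum mup K th_star ->
  is_theta_f mum mup K th_f ->
  is_theta_r mum mup K eps th_r ->
  R_bdy mum mup K eps th_f >= R_bdy mum mup K eps th_star /\
  R_bdy mum mup K eps th_star >= R_bdy mum mup K eps th_r.
Proof.
  intros Hd [He0 He1] HK [HB1 HB2] [Hs1 Hs2] [Hf1 Hf2] [Hr1 Hr2].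
  assert (Ebdy : forall t, R_bdy mum mup K eps t = R_rob mum mup K eps t - R_nat mum mup K t).
  { intros; unfold R_bdy, R_rob, R_nat, e_plus, e_minus; ring. }
  split; [| rewrite !Ebdy; pose proof (Hr2 th_star Hs1); pose proof (Hs2 th_r Hr1); lra].
  assert (HK0 : K <> 0) by lra.
  assert (Heps : eps * (K + 1) ^ 2 <= (mup - mum) * K) by (apply eps_cond; auto; lra).
  set (d := mup - mum) in *.
  assert (Hu : (th_f - mup) / K = - (th_f - mum)).
  { unfold e_plus, e_minus, normal_cdf in Hf2. rewrite !Phi_eq in Hf2.
    assert (H : Dn ((th_f - mup) / K) = Dn (- ((th_f - mum) / 1))) by (rewrite Dn_odd; lra).
    apply Dn_inj in H. rewrite H. field. }
  assert (Hf : d <= (1 + K) * (th_f - mum)).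
  { assert (th_f - mup = - K * (th_f - mum)).
    { replace (th_f - mup) with ((th_f - mup) / K * K) by (field; auto). rewrite Hu; ring. }
    unfold d; nra. }
  set (L := 2 * ln K).
  assert (HL : 0 < L).
  { unfold L. pose proof (ln_increasing 1 K ltac:(lra) HK) as H. rewrite ln_1 in H. lra. }
  assert (gf0 : (th_f - mum) ^ 2 - ((th_f - mup) / K) ^ 2 = 0) by (rewrite Hu; ring).
  set (dN := fun t => / 2 * (gauss_pdf ((t - mup) / K) / K) - / 2 * (gauss_pdf ((t - mum) / 1) / 1)).
  assert (HdN : forall t, derivable_pt_lim (R_nat mum mup K) t (dN t)).
  { intros; apply is_derive_Reals, Rnat_deriv; auto. }
  assert (Hsf : th_f <= th_star).
  { destruct (Rle_dec th_f th_star) as [h|h]; auto. exfalso.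
    destruct (MVT_cor2 (R_nat mum mup K) dN th_star th_f ltac:(lra) (fun c _ => HdN c)) as [c [Ec Hc]].
    assert (Hg : (c - mum) ^ 2 - ((c - mup) / K) ^ 2 < L).
    { pose proof (g_mono mum mup K c th_f HK ltac:(lra) ltac:(lra) ltac:(lra)). lra. }
    apply (BA_lt mum mup K c HK) in Hg.
    assert (dN c < 0) by (unfold dN; lra).
    assert (dN c * (th_f - th_star) < 0) by (apply Rmult_neg_pos; lra) .
    pose proof (Hs2 th_f Hf1). lra. }
  destruct (Rle_lt_or_eq_dec _ _ Hsf) as [Hlt|Heq]; [| rewrite Heq; lra].
  set (dB := fun t => / 2 * (gauss_pdf ((t + eps - mup) / K) / K - gauss_pdf ((t - mup) / K) / K)
    + / 2 * (gauss_pdf ((t - mum) / 1) / 1 - gauss_pdf ((t + - eps - mum) / 1) / 1)).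
  destruct (MVT_cor2 (R_bdy mum mup K eps) dB th_f th_star Hlt
     (fun c _ => proj1 (is_derive_Reals _ _ _) (Rbdy_deriv mum mup K eps c HK0))) as [c [Ec Hc]].
  assert (HAB : gauss_pdf ((c - mup) / K) / K <= gauss_pdf ((c - mum) / 1) / 1).
  { destruct (Rle_dec (gauss_pdf ((c - mup) / K) / K) (gauss_pdf ((c - mum) / 1) / 1)) as [h|h]; auto.
    exfalso. apply Rnot_le_lt in h. apply (AB_lt mum mup K c HK) in h.
    destruct (MVT_cor2 (R_nat mum mup K) dN c th_star ltac:(lra) (fun c _ => HdN c)) as [c' [Ec' Hc']].
    assert (Hg : L < (c' - mum) ^ 2 - ((c' - mup) / K) ^ 2).
    { pose proof (g_mono mum mup K c c' HK ltac:(lra) ltac:(lra) ltac:(lra)). fold L in h. lra. }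
    apply (AB_lt mum mup K c' HK) in Hg.
    assert (0 < dN c') by (unfold dN; lra).
    assert (0 < dN c' * (th_star - c)) by (apply Rmult_lt_0_compat; lra).
    pose proof (Hs2 c ltac:(lra)). lra. }
  assert (HdB : dB c <= 0).
  { set (x := c - mum).
    unfold dB. rewrite !pdf_eq by lra. rewrite !pdf_eq in HAB by lra.
    replace (c + eps - mup) with (x + eps - d) by (unfold x, d; ring).
    replace (c - mup) with (x - d) in * by (unfold x, d; ring).
    replace ((c - mum) / 1) with x in * by (unfold x; field).
    replace ((c + - eps - mum) / 1) with (x - eps) by (unfold x; field).
    assert (Hk := key_ineq x d K eps HK He0 Heps ltac:(unfold x; nra) ltac:(unfold d; lra)).
    pose proof sq_pos.
    assert (HPQ : exp (- ((x - d) / K) ^ 2 / 2) / K <= exp (- x ^ 2 / 2)).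
    { apply Rmult_le_reg_r with (/ sq); [apply Rinv_0_lt_compat; auto|].
      replace (exp (- ((x - d) / K) ^ 2 / 2) / K * / sq) with (exp (- ((x - d) / K) ^ 2 / 2) / (sq * K)) by (field; lra).
      replace (exp (- x ^ 2 / 2) * / sq) with (exp (- x ^ 2 / 2) / (sq * 1)) by (field; lra).
      exact HAB. }
    specialize (Hk HPQ).
    set (E1 := exp (- ((x + eps - d) / K) ^ 2 / 2)) in *.
    set (E2 := exp (- ((x - d) / K) ^ 2 / 2)) in *.
    set (E3 := exp (- x ^ 2 / 2)) in *.
    set (E4 := exp (- (x - eps) ^ 2 / 2)) in *.
    replace (/ 2 * (E1 / (sq * K) - E2 / (sq * K)) + / 2 * (E3 / (sq * 1) - E4 / (sq * 1)))
      with (/ (2 * sq) * ((E1 / K - E2 / K) - (E4 - E3))) by (field; lra).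
    assert (0 < / (2 * sq)) by (apply Rinv_0_lt_compat; lra).
    assert (/ (2 * sq) * ((E1 / K - E2 / K) - (E4 - E3)) <= / (2 * sq) * 0) by (apply Rmult_le_compat_l; lra).
    lra. }
  assert (dB c * (th_star - th_f) <= 0) by (assert (0 <= - dB c * (th_star - th_f)) by (apply Rmult_le_pos; lra); lra).
  lra.
Qed.
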